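(* Every quilt-affine function $g:\mathbb{N}^d\to\mathbb{N}$ (i.e. quilt-affine with nonnegative values) is obliviously-computable.
   Context: A function $g:\mathbb{N}^d\to\mathbb{Z}$ is quilt-affine if it is nondecreasing (componentwise order) and there exist $p\in\mathbb{N}_+$, $\vec{\nabla}\in\mathbb{Q}^d_{\ge0}$ and $B:\mathbb{Z}^d/p\mathbb{Z}^d\to\mathbb{Q}$ with $g(\vec{x})=\vec{\nabla}\cdot\vec{x}+B(\vec{x}\bmod p)$ for all $\vec{x}$, where $\vec{x}\bmod p$ is the class $\{\vec{x}+p\vec{z}:\vec{z}\in\mathbb{Z}^d\}$. A chemical reaction network (CRN) is a pair $(\mathcal{S},\mathcal{R})$ of a finite set of species and a finite set of reactions $(\vec{R},\vec{P})\in\mathbb{N}^{\mathcal{S}}\times\mathbb{N}^{\mathcal{S}}$. A configuration is $\vec{C}\in\mathbb{N}^{\mathcal{S}}$; a reaction is applicable if $\vec{R}\le\vec{C}$ and yields $\vec{C}-\vec{R}+\vec{P}$; reachability is via finite sequences of applicable reactions. To compute $g:\mathbb{N}^d\to\mathbb{N}$ the CRN has input species $X_1,\ldots,X_d$, output species $Y$, leader species $L$; the initial configuration $\vec{I}_{\vec{x}}$ has $\vec{x}(i)$ copies of $X_i$, one $L$, nothing else. $\vec{C}$ is stable if all configurations reachable from it have the same count of $Y$. The CRN stably computes $g$ if for every $\vec{x}$ and every $\vec{C}$ reachable from $\vec{I}_{\vec{x}}$ some stable $\vec{O}$ reachable from $\vec{C}$ has $\vec{O}(Y)=g(\vec{x})$.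 The CRN is output-oblivious if $Y$ is never a reactant; a function is obliviously-computable if stably computed by an output-oblivious CRN. *)

(* Defs.v *)
From HB Require Import structures.
From mathcomp Require Import all_boot all_order all_algebra.
Set Implicit Arguments. Unset Strict Implicit. Unset Printing Implicit Defensive.
Import Order.TTheory GRing.Theory Num.Theory.

Definition vle (d : nat) (x y : 'I_d -> nat) : Prop := forall i, x i <= y i.

(* g : N^d -> N is quilt-affine (viewed as a function into Z):
   nondecreasing, and g x = nabla . x + B (x mod p) with p > 0,
   nabla in Q^d_{>=0}; the class x mod p is represented by its vector of
   residues (x i %% p)_i, so B is any function of that residue vector. *)
Definition quilt_affine (d : nat) (g : ('I_d -> nat) -> nat) : Prop :=
  (forall x y, vle x y -> g x <= g y) /\
  exists (p : nat) (nabla : 'I_d -> rat) (B : ('I_d -> nat) -> rat),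
    (0 < p)%N /\ (forall i, 0 <= nabla i)%R /\
    forall x, ((g x)%:R = \sum_(i < d) nabla i * (x i)%:R
                         + B (fun i => modn (x i) p))%R.

Definition config (S : finType) := {ffun S -> nat}.
Definition reaction (S : finType) := (config S * config S)%type.

Definition applicable (S : finType) (r : reaction S) (c : config S) : Prop :=
  forall s, r.1 s <= c s.

Definition step (S : finType) (rs : seq (reaction S)) (c c' : config S) : Prop :=
  exists2 r, r \in rs &
    applicable r c /\ c' = [ffun s => c s - r.1 s + r.2 s].

Inductive reachable (S : finType) (rs : seq (reaction S)) :
    config S -> config S -> Prop :=
  | reach_refl c : reachable rs c c
  | reach_step c c' c'' : step rs c c' -> reachable rs c' c'' ->
      reachable rs c c''.

Definition stable (S : finType) (rs : seq (reaction S)) (Y : S) (c : config S) :=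
  forall c', reachable rs c c' -> c' Y = c Y.

Definition init_config (S : finType) (d : nat) (X : 'I_d -> S) (L : S)
    (x : 'I_d -> nat) : config S :=
  [ffun s => (\sum_(i < d | X i == s) x i) + (s == L)].

Definition stably_computes (S : finType) (rs : seq (reaction S)) (d : nat)
    (X : 'I_d -> S) (Y L : S) (g : ('I_d -> nat) -> nat) : Prop :=
  forall x c, reachable rs (init_config X L x) c ->
    exists o, [/\ reachable rs c o, stable rs Y o & o Y = g x].

Definition output_oblivious (S : finType) (rs : seq (reaction S)) (Y : S) :=
  forall r, r \in rs -> r.1 Y = 0.

Definition obliviously_computable (d : nat) (g : ('I_d -> nat) -> nat) : Prop :=
  exists (S : finType) (rs : seq (reaction S)) (X : 'I_d -> S) (Y L : S),
    [/\ injective X, (forall i, X i != Y), (forall i, X i != L) & Y != L] /\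
    output_oblivious rs Y /\ stably_computes rs X Y L g.

(* Main.v *)
Require Import Defs.
From mathcomp Require Import all_boot all_order all_algebra.
From mathcomp Require Import zify ring.
From Stdlib Require Import FunctionalExtensionality.
Set Implicit Arguments. Unset Strict Implicit. Unset Printing Implicit Defensive.
Import Order.TTheory GRing.Theory Num.Theory.

Definition res d p (Hp : (0 < p)%N) (y : 'I_d -> nat) : {ffun 'I_d -> 'I_p} :=
  [ffun j => Ordinal (ltn_pmod (y j) Hp)].
Definition vec d p (r : {ffun 'I_d -> 'I_p}) : 'I_d -> nat := fun j => val (r j).
Definition upd d (y : 'I_d -> nat) (i : 'I_d) : 'I_d -> nat := fun j => (y j + (j == i))%N.

Lemma res_upd (d p : nat) (Hp : (0 < p)%N) (y : 'I_d -> nat) i :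
  res Hp (upd (vec (res Hp y)) i) = res Hp (upd y i).
Proof.
apply/ffunP => j; rewrite !ffunE; apply/val_inj => /=.
by rewrite /upd /vec ffunE /= modnDml.
Qed.

Lemma diff_rat d (g : ('I_d -> nat) -> nat) p nabla (B : ('I_d -> nat) -> rat)
  (mono : forall x y, vle x y -> g x <= g y)
  (Hg : forall x, ((g x)%:R = \sum_(i < d) nabla i * (x i)%:R
                         + B (fun i => modn (x i) p))%R) y i :
  ((g (upd y i) - g y)%:R : rat) =
   (\sum_(j < d) nabla j * (j == i)%:R + B (fun j => modn (upd y i j) p)
     - B (fun j => modn (y j) p))%R.
Proof.
rewrite natrB; last by apply: mono => j; rewrite /upd leq_addr.
rewrite !Hg /upd.
under eq_bigr do rewrite natrD mulrDr.
rewrite big_split /=.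
ring.
Qed.

Lemma key d (g : ('I_d -> nat) -> nat) p (Hp : (0 < p)%N) nabla (B : ('I_d -> nat) -> rat)
  (mono : forall x y, vle x y -> g x <= g y)
  (Hg : forall x, ((g x)%:R = \sum_(i < d) nabla i * (x i)%:R
                         + B (fun i => modn (x i) p))%R) y i :
  (g (upd (vec (res Hp y)) i) - g (vec (res Hp y)) = g (upd y i) - g y)%N.
Proof.
apply/eqP; rewrite -(eqr_nat rat) !(diff_rat mono Hg).
have -> : (fun j => upd (vec (res Hp y)) i j %% p) = (fun j => upd y i j %% p).
  by apply: functional_extensionality => j; rewrite /upd /vec ffunE /= modnDml.
have -> : (fun j => vec (res Hp y) j %% p) = (fun j => y j %% p).
  by apply: functional_extensionality => j; rewrite /vec ffunE /= modn_mod.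
by [].
Qed.

Notation Sp d p := ((bool + 'I_d) + {ffun 'I_d -> 'I_p})%type.
Definition sY d p : Sp d p := inl (inl true).
Definition sL d p : Sp d p := inl (inl false).
Definition sX d p (i : 'I_d) : Sp d p := inl (inr i).
Definition sS d p (r : {ffun 'I_d -> 'I_p}) : Sp d p := inr r.

Definition zero d : 'I_d -> nat := fun _ => 0%N.
Arguments sY {d p}. Arguments sL {d p}. Arguments sX {d p}. Arguments sS {d p}. Arguments zero {d}.

Definition r0 d p (Hp : (0 < p)%N) (g : ('I_d -> nat) -> nat) : reaction (Sp d p) :=
  ([ffun s : Sp d p => nat_of_bool (s == sL)],
   [ffun s : Sp d p => ((s == sS (res Hp (@zero d))) + (s == sY) * g (@zero d))%N]).

Definition rx d p (Hp : (0 < p)%N) (g : ('I_d -> nat) -> nat) r i : reaction (Sp d p) :=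
  ([ffun s : Sp d p => ((s == sS r) + (s == sX i))%N],
   [ffun s : Sp d p => ((s == sS (res Hp (upd (vec r) i))) +
               (s == sY) * (g (upd (vec r) i) - g (vec r)))%N]).

Definition rs d p (Hp : (0 < p)%N) (g : ('I_d -> nat) -> nat) : seq (reaction (Sp d p)) :=
  r0 Hp g :: [seq rx Hp g ri.1 ri.2 | ri <- enum {: {ffun 'I_d -> 'I_p} * 'I_d}].

Definition cfg d p (Hp : (0 < p)%N) (g : ('I_d -> nat) -> nat) (x y : 'I_d -> nat)
  : config (Sp d p) :=
  [ffun s : Sp d p => match s with
    | inl (inl true) => g y
    | inl (inl false) => 0%N
    | inl (inr i) => (x i - y i)%N
    | inr r => nat_of_bool (r == res Hp y) end].

Lemma rs_inv (d p : nat) (Hp : (0 < p)%N) (g : ('I_d -> nat) -> nat) (r : reaction (Sp d p)) : r \in rs Hp g ->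
  r = r0 Hp g \/ exists r' i, r = rx Hp g r' i.
Proof.
rewrite inE => /orP [/eqP ->|/mapP [[r' i] _ ->]]; first by left.
by right; exists r', i.
Qed.

Lemma rx_in (d p : nat) (Hp : (0 < p)%N) (g : ('I_d -> nat) -> nat) r (i : 'I_d) : rx Hp g r i \in rs Hp g.
Proof.
rewrite inE; apply/orP; right; apply/mapP; exists (r, i) => //; by rewrite mem_enum.
Qed.

Lemma eqXX d p (i j : 'I_d) : (sX i == sX j :> Sp d p) = (i == j).
Proof. by apply/eqP/eqP => [[]|->]. Qed.
Lemma eqSS d p (r r' : {ffun 'I_d -> 'I_p}) : (sS r == sS r' :> Sp d p) = (r == r').
Proof. by apply/eqP/eqP => [[]|->]. Qed.

Lemma rx_eff (d p : nat) (Hp : (0 < p)%N) (g : ('I_d -> nat) -> nat)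
  (mono : forall x y, vle x y -> g x <= g y)
  (Hk : forall y i, (g (upd (vec (res Hp y)) i) - g (vec (res Hp y)) = g (upd y i) - g y)%N)
  x y i : y i < x i ->
  [ffun s => cfg Hp g x y s - (rx Hp g (res Hp y) i).1 s + (rx Hp g (res Hp y) i).2 s]
   = cfg Hp g x (upd y i).
Proof.
move=> Hyi.
apply/ffunP => s; rewrite !ffunE; case: s => [[[|]|j]|r''] /=.
- rewrite Hk. have : g y <= g (upd y i) by apply: mono => j; rewrite /upd leq_addr.
  by rewrite !add0n mul1n subn0 => H; rewrite subnKC.
- by [].
- rewrite /upd; have [->|Hne] := eqVneq j i.
    by rewrite eqxx !add0n mul0n addn0 /= subnDA.
  have -> : (inl (inr j) == sX i :> Sp d p) = false by rewrite -[inl _]/(sX j) eqXX (negbTE Hne).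
  by rewrite !add0n /= !addn0 !subn0.
- rewrite -[inr r'']/(sS r'') !eqSS res_upd !addn0.
  by rewrite subnn.
Qed.

Lemma step_cfg (d p : nat) (Hp : (0 < p)%N) (g : ('I_d -> nat) -> nat)
  (mono : forall x y, vle x y -> g x <= g y)
  (Hk : forall y i, (g (upd (vec (res Hp y)) i) - g (vec (res Hp y)) = g (upd y i) - g y)%N)
  x y c' : vle y x -> step (rs Hp g) (cfg Hp g x y) c' ->
  exists2 i, y i < x i & c' = cfg Hp g x (upd y i).
Proof.
move=> Hyx [r /rs_inv [->|[r' [i ->]]] [Happ ->]].
  by have := Happ sL; rewrite !ffunE /=.
have Hr := Happ (sS r'); rewrite !ffunE /= eqxx in Hr.
have /eqP Er : r' == res Hp y by move: Hr; case: (r' == _).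
have Hi := Happ (sX i); rewrite !ffunE /= eqxx in Hi.
have Hyi : y i < x i by move: Hi; rewrite /= ?add0n subn_gt0.
subst r'.
exists i => //.
exact: rx_eff.
Qed.

Lemma init_val (d p : nat) (x : 'I_d -> nat) (s : Sp d p) :
  init_config sX sL x s =
  match s with
  | inl (inl true) => 0%N
  | inl (inl false) => 1%N
  | inl (inr i) => x i
  | inr r => 0%N end.
Proof.
rewrite ffunE; case: s => [[[|]|j]|r''] /=.
- by rewrite big_pred0.
- by rewrite big_pred0.
- rewrite (eq_bigl (fun i => i == j)); last by move=> k; rewrite eqXX.
  by rewrite big_pred1_eq addn0.
- by rewrite big_pred0.
Qed.

Lemma r0_eff (d p : nat) (Hp : (0 < p)%N) (g : ('I_d -> nat) -> nat) x :
  [ffun s => init_config sX sL x s - (r0 Hp g).1 s + (r0 Hp g).2 s]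
   = cfg Hp g x zero.
Proof.
apply/ffunP => s; rewrite ffunE init_val !ffunE; case: s => [[[|]|j]|r''] /=.
- by rewrite subnn !add0n mul1n.
- by rewrite subnn !add0n mul0n.
- by rewrite !addn0 !subn0.
- rewrite -[inr r'']/(sS r'') eqSS. by rewrite subnn add0n mul0n addn0.
Qed.

Lemma step_init (d p : nat) (Hp : (0 < p)%N) (g : ('I_d -> nat) -> nat) x c' :
  step (rs Hp g) (init_config sX sL x) c' -> c' = cfg Hp g x zero.
Proof.
move=> [r /rs_inv [->|[r' [i ->]]] [Happ ->]]; first exact: r0_eff.
by have := Happ (sS r'); rewrite init_val !ffunE /= eqxx.
Qed.

Lemma step_init' (d p : nat) (Hp : (0 < p)%N) (g : ('I_d -> nat) -> nat) x :
  step (rs Hp g) (init_config sX sL x) (cfg Hp g x zero).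
Proof.
exists (r0 Hp g); first by rewrite inE eqxx.
split; last by rewrite r0_eff.
move=> s; rewrite init_val !ffunE; case: s => [[[|]|j]|r''] //=.
Qed.

Lemma step_cfg' (d p : nat) (Hp : (0 < p)%N) (g : ('I_d -> nat) -> nat)
  (mono : forall x y, vle x y -> g x <= g y)
  (Hk : forall y i, (g (upd (vec (res Hp y)) i) - g (vec (res Hp y)) = g (upd y i) - g y)%N)
  x y i : y i < x i -> step (rs Hp g) (cfg Hp g x y) (cfg Hp g x (upd y i)).
Proof.
move=> Hyi; exists (rx Hp g (res Hp y) i); first exact: rx_in.
split; last by rewrite (rx_eff mono Hk).
move=> s; rewrite !ffunE; case: s => [[[|]|j]|r''] //=.
- rewrite -[inl (inr j)]/(sX j) eqXX; case: eqP => [->|_] //.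
  by rewrite subn_gt0.
- rewrite -[inr r'']/(sS r'') eqSS; by case: eqP.
Qed.

Lemma reach_final (d p : nat) (Hp : (0 < p)%N) (g : ('I_d -> nat) -> nat)
  (mono : forall x y, vle x y -> g x <= g y)
  (Hk : forall y i, (g (upd (vec (res Hp y)) i) - g (vec (res Hp y)) = g (upd y i) - g y)%N)
  x : forall n y, vle y x -> (\sum_i (x i - y i))%N = n ->
  reachable (rs Hp g) (cfg Hp g x y) (cfg Hp g x x).
Proof.
elim=> [|n IH] y Hyx Hn.
  have -> : y = x; last exact: reach_refl.
  apply: functional_extensionality => i.
  have : (x i - y i <= 0)%N by rewrite -Hn (bigD1 i) //= leq_addr.
  by have := Hyx i; lia.
case: (pickP (fun i => y i < x i)) => [i Hi|H]; last first.
  move: Hn; rewrite big1 // => i _; apply/eqP; rewrite subn_eq0 leqNgt H //.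
apply: (reach_step (step_cfg' mono Hk Hi)).
apply: IH.
  move=> j; rewrite /upd; case: eqP => [->|_]; first by rewrite addn1.
  by rewrite addn0.
rewrite (bigD1 i) //= in Hn; rewrite (bigD1 i) //= /upd eqxx.
rewrite (eq_bigr (fun j => x j - y j)); last by move=> j /negbTE ->; rewrite addn0.
move: Hi Hn; lia.
Qed.

Lemma final_stable (d p : nat) (Hp : (0 < p)%N) (g : ('I_d -> nat) -> nat)
  (mono : forall x y, vle x y -> g x <= g y)
  (Hk : forall y i, (g (upd (vec (res Hp y)) i) - g (vec (res Hp y)) = g (upd y i) - g y)%N)
  x : stable (rs Hp g) sY (cfg Hp g x x).
Proof.
move=> c'.
have : forall c, reachable (rs Hp g) c c' -> c = cfg Hp g x x -> c' = c.
  move=> c H; case: H => // c0 c1 c2 Hs _ E; subst c0.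
  have [|i Hi _] := step_cfg mono Hk _ Hs; first by [].
  by rewrite ltnn in Hi.
by move=> H /H -> .
Qed.

Lemma vle_upd d (x y : 'I_d -> nat) i : vle y x -> y i < x i -> vle (upd y i) x.
Proof.
move=> Hyx Hi j; rewrite /upd; case: eqP => [->|_]; first by rewrite addn1.
by rewrite addn0.
Qed.

Theorem lemma14 (d : nat) (g : ('I_d -> nat) -> nat) :
  quilt_affine g -> obliviously_computable g.
Proof.
move=> [mono [p [nabla [B [Hp [_ Hg]]]]]].
have Hk := fun y i => key Hp mono Hg y i.
exists (Sp d p), (rs Hp g), (@sX d p), sY, sL.
split; first split => //; first by move=> i j [].
split.
  by move=> r /rs_inv [->|[r' [i ->]]]; rewrite ffunE.
move=> x c Hc.
have Inv : forall c1 c2, reachable (rs Hp g) c1 c2 ->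
    (c1 = init_config sX sL x \/ exists2 y, vle y x & c1 = cfg Hp g x y) ->
    (c2 = init_config sX sL x \/ exists2 y, vle y x & c2 = cfg Hp g x y).
  move=> c1 c2; elim => [c0|c0 c1' c2' Hs _ IH] // H; apply: IH.
  case: H => [E|[y Hy E]]; subst c0.
    by right; exists zero; [move=> i | exact: step_init].
  have [i Hi ->] := step_cfg mono Hk Hy Hs.
  by right; exists (upd y i) => //; apply: vle_upd.
have Hfin : forall y, vle y x -> reachable (rs Hp g) (cfg Hp g x y) (cfg Hp g x x).
  by move=> y Hy; exact: (reach_final mono Hk Hy erefl).
case: (Inv _ _ Hc (or_introl erefl)) => [E|[y Hy E]]; subst c.
  exists (cfg Hp g x x); split; last by rewrite ffunE.
    apply: reach_step; first exact: step_init'.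
    by apply: Hfin => i.
  exact: final_stable.
exists (cfg Hp g x x); split; last by rewrite ffunE.
  exact: Hfin.
exact: final_stable.
Qed.
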